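(* Let $N$ be a phylogenetic network on $X\subseteq[n]$ and let $i,j\in[n]$, $i\neq j$. Then $(i,j)$ is a reticulated-cherry of $N$ if and only if $(i,j)$ is a reticulated-cherry of the multiset $\boldsymbol\mu(N)$.
   Context: A (binary) phylogenetic network on a finite set $X\subseteq[n]=\{1,\dots,n\}$ is a directed acyclic graph $N=(V,A)$ without parallel arcs in which every node is exactly one of: the root (indegree 0, outdegree 1; there is exactly one), a leaf (indegree 1, outdegree 0), a tree node (indegree 1, outdegree 2), or a reticulation (indegree 2, outdegree 1); the leaves are identified with the elements of $X$. $V_T(N)$ denotes the set of leaves and tree nodes, $V_H(N)$ the set of reticulations. Paths are directed and trivial paths of length 0 are allowed; $m(u,v)$ denotes the number of directed paths from $u$ to $v$. Extended $\mu$-vectors: for $u\in V$ and $i\in[n]$, $\mu_i(u)=m(u,i)$ (which is $0$ if $i\notin X$), and $\mu_0(u)=\sum_{h\in V_H(N)} m(u,h)$; $\mu(u)=(\mu_0(u),\dots,\mu_n(u))$. The (extended) $\mu$-representation $\boldsymbol\mu(N)$ is the multiset $\{\mu(u)\mid u\in V_T(N)\}$, each vector counted with the number of nodes of $V_T(N)$ having it. For $S\subseteq\{0,\dots,n\}$, $\delta_S$ is the 0/1 indicator vector of $S$ indexed by $0,\dots,n$, and $\delta_{j_1,\dots,j_k}=\delta_{\{j_1,\dots,j_k\}}$. In a network, for distinct leaves $i,j$ with parents $p_i,p_j$, $(i,j)$ is a reticulated-cherry of $N$ if $p_i$ is a reticulation, $p_j$ is a tree node, and $p_j$ is a parent of $p_i$.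 For a finite multiset $\boldsymbol\mu$ of vectors of nonnegative integers indexed by $0,\dots,n$ and distinct $i,j\in[n]$, $(i,j)$ is a reticulated-cherry of $\boldsymbol\mu$ if $\delta_{0,i,j}$ belongs to $\boldsymbol\mu$ with multiplicity exactly $1$, and every element $\mu=(\mu_0,\dots,\mu_n)$ of $\boldsymbol\mu$ other than $\delta_i$ and $\delta_j$ satisfies $\mu_0\ge\mu_i\ge\mu_j$. *)

(* Defs.v *)
From mathcomp Require Import all_boot.
Set Implicit Arguments. Unset Strict Implicit. Unset Printing Implicit Defensive.

Section Network.
Variables (V : finType) (A : rel V).
(* A u v : there is an arc u -> v (a relation, so no parallel arcs). *)

Definition indeg (v : V) : nat := #|[pred u | A u v]|.
Definition outdeg (v : V) : nat := #|[pred w | A v w]|.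

Definition is_root (v : V) : bool := (indeg v == 0) && (outdeg v == 1).
Definition is_leaf (v : V) : bool := (indeg v == 1) && (outdeg v == 0).
Definition is_tree (v : V) : bool := (indeg v == 1) && (outdeg v == 2).
Definition is_ret  (v : V) : bool := (indeg v == 2) && (outdeg v == 1).

Definition acyclic : Prop := forall u v, A u v -> ~~ connect A v u.

(* m(u,v): number of directed paths from u to v (trivial path allowed).
   A path with k arcs is a k-tuple of successor vertices; in a DAG its
   k+1 vertices are distinct, so k < #|V| and the sum is exhaustive. *)
Definition npaths (u v : V) : nat :=
  \sum_(k < #|V|) #|[set t : k.-tuple V | path A u t && (last u t == v)]|.

(* Binary phylogenetic network on X = lab @ leaves, X a subset of [n];
   lab identifies leaves injectively with elements of [n]. *)
Definition phylo_network (n : nat) (lab : V -> nat) : Prop :=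
  [/\ acyclic,
      forall v, [|| is_root v, is_leaf v, is_tree v | is_ret v],
      #|[pred v | is_root v]| = 1,
      forall v, is_leaf v -> 0 < lab v <= n &
      {in is_leaf &, injective lab}].

Definition leaf_of (lab : V -> nat) (i : nat) : option V :=
  [pick v | is_leaf v && (lab v == i)].

Definition mu (n : nat) (lab : V -> nat) (u : V) : {ffun 'I_n.+1 -> nat} :=
  [ffun k : 'I_n.+1 =>
     if val k == 0 then \sum_(h | is_ret h) npaths u h
     else if leaf_of lab (val k) is Some l then npaths u l else 0].

(* the multiset mu(N), as a sequence (multiplicity = count_mem) *)
Definition mu_rep (n : nat) (lab : V -> nat) : seq {ffun 'I_n.+1 -> nat} :=
  map (mu n lab) (enum (fun u => is_leaf u || is_tree u)).

Definition ret_cherry_net (lab : V -> nat) (i j : nat) : Prop :=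
  exists li lj pi pj : V,
    [/\ is_leaf li /\ lab li = i, is_leaf lj /\ lab lj = j,
        A pi li /\ is_ret pi, A pj lj /\ is_tree pj & A pj pi].

End Network.

Definition delta (n : nat) (s : seq nat) : {ffun 'I_n.+1 -> nat} :=
  [ffun k : 'I_n.+1 => nat_of_bool (val k \in s)].

Definition ret_cherry_ms (n : nat) (ms : seq {ffun 'I_n.+1 -> nat})
  (i j : 'I_n.+1) : Prop :=
  count_mem (delta n [:: 0; val i; val j]) ms = 1 /\
  forall m, m \in ms -> m != delta n [:: val i] -> m != delta n [:: val j] ->
    (m i <= m ord0) && (m j <= m i).

(* Main.v *)
Require Import Defs.
From mathcomp Require Import all_boot.
Set Implicit Arguments. Unset Strict Implicit. Unset Printing Implicit Defensive.

Section Paths.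
Variables (V : finType) (A : rel V).
Hypothesis acyc : acyclic A.

Definition cnt k (v w : V) : nat :=
  \sum_(t : k.-tuple V) (path A v t && (last v t == w)).

Lemma npaths_cnt v w : npaths A v w = \sum_(k < #|V|) cnt k v w.
Proof.
apply: eq_bigr => k _; rewrite /cnt cardsE -sum1_card big_mkcond /=.
by apply: eq_bigr => t _; rewrite unfold_in; case: (_ && _).
Qed.

Lemma cnt0 v w : cnt 0 v w = (v == w).
Proof.
rewrite /cnt (big_pred1 [tuple]) //= => t; apply/esym/eqP; exact: tuple0.
Qed.

Lemma cntS k v w : cnt k.+1 v w = \sum_(c | A v c) cnt k c w.
Proof.
rewrite /cnt.
rewrite (reindex (fun p : V * k.-tuple V => [tuple of p.1 :: p.2])) /=; last first.
  exists (fun t : k.+1.-tuple V => (thead t, [tuple of behead t])) => [[x t] _|t _].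
    by congr pair; apply: val_inj.
  by apply: val_inj => /=; case: t => [[|x s]].
rewrite [RHS]big_mkcond /=.
rewrite (eq_bigr (fun c => \sum_(t : k.-tuple V) (A v c && path A c t && (last c t == w)))).
  by rewrite pair_bigA.
move=> c _; case: (A v c) => //=.
by rewrite big1.
Qed.

Lemma path_uniq v (t : seq V) : path A v t -> uniq (v :: t).
Proof.
elim: t v => [|x t IH] v //= /andP[Avx pt].
have := IH _ pt; rewrite /= => ->; rewrite andbT.
apply/negP => vin.
have cxv : connect A x v by apply: (path_connect pt).
by have := acyc Avx; rewrite cxv.
Qed.

Lemma cnt_big k v w : #|V| <= k -> cnt k v w = 0.
Proof.
move=> hk; rewrite /cnt big1 // => t _.
case pt: (path A v t) => //=.
have := path_uniq pt => /card_uniqP; rewrite /= size_tuple => h.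
have := max_card (mem (v :: t)); rewrite h /=; move=> h2; have := leq_trans h2 hk; by rewrite ltnn.
Qed.

Lemma sum_ind (T : finType) (P : pred T) (a : T) :
  \sum_(x | P x) (a == x) = P a.
Proof.
case Pa: (P a).
  rewrite (bigD1 a) //= eqxx big1 // => x /andP[_ /negbTE]; by rewrite eq_sym => ->.
by rewrite big1 // => x Px; case: eqP => // ax; rewrite ax Px in Pa.
Qed.

Lemma cntS' k v w : cnt k.+1 v w = \sum_(p | A p w) cnt k v p.
Proof.
elim: k v => [|k IH] v.
  rewrite cntS (eq_bigr (fun c => (w == c) : nat)); last by move=> c _; rewrite cnt0 eq_sym.
  rewrite sum_ind (eq_bigr (fun c => (v == c) : nat)); last by move=> c _; rewrite cnt0.
  by rewrite sum_ind.
rewrite cntS (eq_bigr (fun c => \sum_(p | A p w) cnt k c p)); last by move=> c _; rewrite IH.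
rewrite exchange_big /=; apply: eq_bigr => p _; by rewrite cntS.
Qed.

Lemma npaths_first v w : npaths A v w = (v == w) + \sum_(c | A v c) npaths A c w.
Proof.
rewrite npaths_cnt.
have : 0 < #|V| by apply/card_gt0P; exists v.
case E: #|V| => [//|N] _.
rewrite big_ord_recl cnt0 /=; congr addn.
rewrite (eq_bigr (fun k : 'I_N => \sum_(c | A v c) cnt k c w)); last first.
  by move=> k _; rewrite /bump /= cntS.
rewrite exchange_big /=; apply: eq_bigr => c Avc.
rewrite npaths_cnt E big_ord_recr /=.
suff -> : cnt N c w = 0 by rewrite addn0.
have : cnt N.+1 v w = 0 by apply: cnt_big; rewrite E.
rewrite cntS (bigD1 c) //=; by case: (cnt N c w).
Qed.

Lemma npaths_last v w : npaths A v w = (v == w) + \sum_(p | A p w) npaths A v p.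
Proof.
rewrite npaths_cnt.
have : 0 < #|V| by apply/card_gt0P; exists v.
case E: #|V| => [//|N] _.
rewrite big_ord_recl cnt0 /=; congr addn.
rewrite (eq_bigr (fun k : 'I_N => \sum_(p | A p w) cnt k v p)); last first.
  by move=> k _; rewrite /bump /= cntS'.
rewrite exchange_big /=; apply: eq_bigr => p Apw.
rewrite npaths_cnt E big_ord_recr /=.
suff -> : cnt N v p = 0 by rewrite addn0.
have : cnt N.+1 v w = 0 by apply: cnt_big; rewrite E.
rewrite cntS' (bigD1 p) //=; by case: (cnt N v p).
Qed.

End Paths.

Section Card.
Variable T : finType.
Implicit Types P : pred T.

Lemma pin1 P a : #|P| = 1 -> P a -> forall c, P c = (c == a).
Proof.
move=> h Pa c.
have e : (pred1 a) =i P.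
  apply/subset_cardP; first by rewrite card1 h.
  by apply/subsetP => x /=; rewrite inE => /eqP ->.
by have := e c; rewrite !inE unfold_in /= => <-.
Qed.

Lemma pin2 P a b : #|P| = 2 -> P a -> P b -> a != b ->
  forall c, P c = (c == a) || (c == b).
Proof.
move=> h Pa Pb ab c.
have e : (pred2 a b) =i P.
  apply/subset_cardP; first by rewrite card2 h ab.
  by apply/subsetP => x /=; rewrite !inE => /orP[] /eqP ->.
by have := e c; rewrite !inE unfold_in /= => <-.
Qed.

Lemma ex1 P : #|P| = 1 -> exists a, P a.
Proof. move=> h; have : 0 < #|P| by rewrite h. by case/card_gt0P => x; exists x. Qed.

Lemma exD P a : #|P| = 2 -> P a -> exists b, b != a /\ P b.
Proof.
move=> h Pa; have := cardD1 a P; rewrite h.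
have -> : a \in P by [].
move=> h2; have : 0 < #|[predD1 P & a]| by rewrite -(addnK 1 #|[predD1 P & a]|) addnC -h2.
case/card_gt0P => b; rewrite !inE => /andP[ba Pb]; by exists b.
Qed.

Lemma ex2 P : #|P| = 2 -> exists a b, [/\ a != b, P a & P b].
Proof.
move=> h; have : 0 < #|P| by rewrite h.
case/card_gt0P => a Pa; case: (exD h Pa) => b [ba Pb].
by exists a, b; rewrite eq_sym.
Qed.

Lemma nin0 P c : #|P| = 0 -> P c = false.
Proof. by move/card0_eq/(_ c); rewrite !inE. Qed.
End Card.

Lemma big1p (T : finType) (F : T -> nat) (P : pred T) a :
  (forall c, P c = (c == a)) -> \sum_(c | P c) F c = F a.
Proof. move=> h; exact: big_pred1. Qed.

Lemma big2p (T : finType) (F : T -> nat) (P : pred T) a b : a != b ->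
  (forall c, P c = (c == a) || (c == b)) -> \sum_(c | P c) F c = F a + F b.
Proof.
move=> ab h; rewrite (bigD1 a) ?h ?eqxx //=; congr addn.
apply: big_pred1 => c /=; rewrite h; case: (c =P b) => [->|/eqP cb]; first by rewrite orbT eq_sym ab.
by rewrite orbF andbN.
Qed.

Section Net.
Variables (V : finType) (A : rel V).
Hypothesis acyc : acyclic A.
Hypothesis cls : forall v, [|| is_root A v, is_leaf A v, is_tree A v | is_ret A v].
Hypothesis root1 : #|[pred v | is_root A v]| = 1.

Local Notation f := (npaths A).

Lemma leaf_noch l c : is_leaf A l -> A l c = false.
Proof. by case/andP => _ /eqP h; rewrite /outdeg in h; exact: (nin0 _ h). Qed.

Lemma root_nopar r p : is_root A r -> A p r = false.
Proof. by case/andP => /eqP h _; rewrite /indeg in h; exact: (nin0 _ h). Qed.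

Lemma noparent_root v : (forall p, A p v = false) -> is_root A v.
Proof.
move=> h; have e : indeg A v = 0 by apply: eq_card0 => p; rewrite !inE /= h.
by have := cls v; rewrite /is_leaf /is_tree /is_ret e /= !orbF.
Qed.

Lemma nochild_leaf v : (forall c, A v c = false) -> is_leaf A v.
Proof.
move=> h; have e : outdeg A v = 0 by apply: eq_card0 => p; rewrite !inE /= h.
by have := cls v; rewrite /is_root /is_tree /is_ret e !andbF /= orbF.
Qed.

Lemma haspar_notroot p v : A p v -> is_root A v = false.
Proof. by move=> Apv; apply/negbTE/negP => /root_nopar => /(_ p); rewrite Apv. Qed.

Lemma fleaf l w : is_leaf A l -> f l w = (l == w).
Proof.
move=> Ll; rewrite npaths_first // big_pred0 ?addn0 // => c; exact: leaf_noch.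
Qed.

Lemma fchild v c w : A v c -> f c w <= f v w.
Proof. by move=> Avc; rewrite (npaths_first acyc v) (bigD1 c) //= addnCA leq_addr. Qed.

Lemma fself v : 0 < f v v.
Proof. by rewrite npaths_first // eqxx. Qed.

Lemma fconn v w : connect A v w -> 0 < f v w.
Proof.
case/connectP => p; elim: p v => [|x p IH] v /=; first by move=> _ ->; exact: fself.
case/andP => Avx px lw; apply: leq_trans (fchild w Avx); exact: IH.
Qed.

Lemma sink (P : pred V) x0 : P x0 -> exists w, P w /\ forall c, A w c -> P c = false.
Proof.
move=> Px0; case: (arg_minnP (fun w => #|[pred y | connect A w y]|) Px0) => w Pw minw.
exists w; split => // c Awc; apply/negbTE/negP => Pc.
have := minw c Pc; rewrite leqNgt => /negP; apply; apply: proper_card.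
apply/properP; split.
  apply/subsetP => y; rewrite !inE /=; apply: connect_trans; exact: connect1.
exists w; rewrite !inE /= ?connect0 //; apply/negP => cw; by have := acyc Awc; rewrite cw.
Qed.

Lemma source (P : pred V) x0 : P x0 -> exists w, P w /\ forall p, A p w -> P p = false.
Proof.
move=> Px0; case: (arg_minnP (fun w => #|[pred y | connect A y w]|) Px0) => w Pw minw.
exists w; split => // c Acw; apply/negbTE/negP => Pc.
have := minw c Pc; rewrite leqNgt => /negP; apply; apply: proper_card.
apply/properP; split.
  apply/subsetP => y; rewrite !inE /= => yc; apply: connect_trans yc _; exact: connect1.
exists w; rewrite !inE /= ?connect0 //; apply/negP => wc; by have := acyc Acw; rewrite wc.
Qed.

Lemma reach_leaf v : exists l, is_leaf A l /\ connect A v l.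
Proof.
have [w [vw h]] := sink (connect0 A v).
exists w; split => //; apply: nochild_leaf => c; apply/negbTE/negP => Awc.
by have := h c Awc; rewrite (connect_trans vw (connect1 Awc)).
Qed.

Lemma root_reach r v : is_root A r -> connect A r v.
Proof.
move=> Rr; have [w [wv h]] := source (P := fun y => connect A y v) (connect0 A v).
have Rw : is_root A w.
  apply: noparent_root => p; apply/negbTE/negP => Apw.
  by have := h p Apw; rewrite (connect_trans (connect1 Apw) wv).
have e := pin1 root1 Rw.
by have := e r; rewrite /= Rr => /esym/eqP ->.
Qed.

Lemma connect_step v w : connect A v w -> v != w -> exists c, A v c /\ connect A c w.
Proof.
case/connectP => [[|c p]] /=; first by move=> _ ->; rewrite eqxx.
case/andP => Avc pc lw _; exists c; split => //; apply/connectP; by exists p.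
Qed.

Lemma root_child r x : is_root A r -> A r x -> is_ret A x = false.
Proof.
move=> Rr Arx; apply/negbTE/negP => /andP[/eqP hx _].
have [y [yr Ayx]] := exD hx (Arx : [pred u | A u x] r).
have ry := root_reach y Rr.
have [c [Arc cy]] := connect_step ry (negbT (introF eqP (fun e => (negP yr) (introT eqP (esym e))))).
have : c = x.
  move: Rr => /andP[_ /eqP ho]; have := pin1 ho (Arx : [pred u | A r u] x) c.
  by rewrite /= Arc => /esym/eqP.
move=> ecx; rewrite ecx in cy.
by have := acyc Ayx; rewrite cy.
Qed.

End Net.

Section Mu.
Variables (n : nat) (V : finType) (A : rel V) (lab : V -> nat).
Hypothesis labi : {in is_leaf A &, injective lab}.
Local Notation f := (npaths A).
Local Notation mu := (mu A n lab).

Lemma mu0 u : mu u ord0 = \sum_(h | is_ret A h) f u h.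
Proof. by rewrite ffunE. Qed.

Lemma muk u (k : 'I_n.+1) : 0 < k -> mu u k = \sum_(x | is_leaf A x && (lab x == k)) f u x.
Proof.
move=> k0; rewrite ffunE -[val k == 0]/(k == 0 :> nat) eqn0Ngt k0 /= /leaf_of.
case: pickP => [x /andP[Lx /eqP lx]|none].
  apply/esym/big_pred1 => y /=; apply/idP/idP => [/andP[Ly /eqP ly]|/eqP ->].
    by apply/eqP; apply: labi; rewrite // ly lx.
  by rewrite Lx lx eqxx.
by rewrite big_pred0.
Qed.

Lemma mu_at u (k : 'I_n.+1) x : is_leaf A x -> lab x = k -> 0 < k -> mu u k = f u x.
Proof.
move=> Lx lx k0; rewrite muk //; apply: big_pred1 => y /=.
apply/idP/idP => [/andP[Ly /eqP ly]|/eqP ->].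
  by apply/eqP; apply: labi; rewrite // ly lx.
by rewrite Lx lx eqxx.
Qed.

Lemma mu_none u (k : 'I_n.+1) : 0 < k -> (forall x, is_leaf A x -> lab x != k) -> mu u k = 0.
Proof.
move=> k0 h; rewrite muk // big_pred0 // => x; case Lx: (is_leaf A x) => //=.
exact: negbTE (h x Lx).
Qed.

Lemma mem_rep m : (m \in mu_rep A n lab) = [exists u, (is_leaf A u || is_tree A u) && (m == mu u)].
Proof.
apply/mapP/existsP => [[u]|[u /andP[Pu /eqP ->]]].
  by rewrite mem_enum => Pu ->; exists u; rewrite eqxx andbT; exact: Pu.
by exists u; rewrite ?mem_enum.
Qed.

Lemma count_rep d u0 : is_leaf A u0 || is_tree A u0 -> mu u0 = d ->
  (forall u, is_leaf A u || is_tree A u -> mu u = d -> u = u0) ->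
  count_mem d (mu_rep A n lab) = 1.
Proof.
move=> P0 e0 uniq0; rewrite /mu_rep count_map.
rewrite (@eq_in_count _ _ (pred1 u0)); last first.
  move=> u; rewrite mem_enum /= => Pu; apply/eqP/eqP => [|->//].
  exact: uniq0.
by rewrite (count_uniq_mem _ (enum_uniq _)) mem_enum unfold_in /= P0.
Qed.

Lemma count_ex d : 0 < count_mem d (mu_rep A n lab) ->
  exists u, (is_leaf A u || is_tree A u) /\ mu u = d.
Proof.
rewrite -has_count has_pred1 mem_rep => /existsP[u /andP[Pu /eqP e]].
by exists u.
Qed.

End Mu.

Section Deg.
Variables (V : finType) (A : rel V).
Lemma leaf_tree x : is_leaf A x -> is_tree A x = false.
Proof. by rewrite /is_leaf /is_tree => /andP[_ /eqP ->]; rewrite andbF. Qed.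
Lemma leaf_ret x : is_leaf A x -> is_ret A x = false.
Proof. by rewrite /is_leaf /is_ret => /andP[/eqP -> _]. Qed.
Lemma tree_ret x : is_tree A x -> is_ret A x = false.
Proof. by rewrite /is_tree /is_ret => /andP[/eqP -> _]. Qed.
Lemma tree_leaf x : is_tree A x -> is_leaf A x = false.
Proof. by move=> T; apply/negbTE/negP => /leaf_tree; rewrite T. Qed.
Lemma ret_leaf x : is_ret A x -> is_leaf A x = false.
Proof. by move=> T; apply/negbTE/negP => /leaf_ret; rewrite T. Qed.
Lemma leaf_root x : is_leaf A x -> is_root A x = false.
Proof. by rewrite /is_leaf /is_root => /andP[/eqP -> _]. Qed.
Lemma tree_root x : is_tree A x -> is_root A x = false.
Proof. by rewrite /is_tree /is_root => /andP[/eqP -> _]. Qed.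
Lemma ret_root x : is_ret A x -> is_root A x = false.
Proof. by rewrite /is_ret /is_root => /andP[/eqP -> _]. Qed.
End Deg.

Lemma sum_split_ind (T : finType) (P : pred T) a (G : T -> nat) :
  \sum_(x | P x) ((a == x) + G x) = P a + \sum_(x | P x) G x.
Proof. by rewrite big_split /= sum_ind. Qed.

Section Main.
Variables (n : nat) (V : finType) (A : rel V) (lab : V -> nat).
Hypothesis acyc : acyclic A.
Hypothesis cls : forall v, [|| is_root A v, is_leaf A v, is_tree A v | is_ret A v].
Hypothesis root1 : #|[pred v | is_root A v]| = 1.
Hypothesis labr : forall v, is_leaf A v -> 0 < lab v <= n.
Hypothesis labi : {in is_leaf A &, injective lab}.
Local Notation f := (npaths A).
Local Notation mu := (mu A n lab).

Lemma ordlab x : is_leaf A x -> lab x < n.+1.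
Proof. by move/labr => /andP[_ h]. Qed.

Lemma mu_leaf x : is_leaf A x -> mu x = delta n [:: lab x].
Proof.
move=> Lx; apply/ffunP => k; rewrite [RHS]ffunE inE.
case: (posnP k) => [k0|k0].
  have -> : k = ord0 by apply: val_inj.
  rewrite mu0 (eq_bigr (fun h => (x == h) : nat)); last by move=> h _; rewrite fleaf.
  rewrite sum_ind (leaf_ret Lx) /=; case: eqP => // e.
  by have := labr Lx; rewrite -e.
rewrite muk // (eq_bigr (fun h => (x == h) : nat)); last by move=> h _; rewrite fleaf.
by rewrite sum_ind Lx /= eq_sym.
Qed.


Lemma delta_at (s : seq nat) (k : 'I_n.+1) : delta n s k = (val k \in s).
Proof. by rewrite ffunE. Qed.

Lemma fwd (i j : 'I_n.+1) li lj pi pj : 0 < i -> 0 < j -> i != j ->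
  is_leaf A li -> lab li = i -> is_leaf A lj -> lab lj = j ->
  A pi li -> is_ret A pi -> A pj lj -> is_tree A pj -> A pj pi ->
  ret_cherry_ms (mu_rep A n lab) i j.
Proof.
move=> i0 j0 ij Lli labli Llj lablj Api Rpi Apj Tpj Apjpi.
have lilj : li != lj.
  by move: ij; apply: contraNneq => e; rewrite -val_eqE /= -labli -lablj e.
have ljpi : lj != pi by apply/eqP => e; move: Rpi; rewrite -e leaf_ret.
have parli : forall p, A p li = (p == pi).
  move: Lli => /andP[/eqP h _]; exact: (pin1 h Api).
have parlj : forall p, A p lj = (p == pj).
  move: Llj => /andP[/eqP h _]; exact: (pin1 h Apj).
have chpi : forall c, A pi c = (c == li).
  move: Rpi => /andP[_ /eqP h]; exact: (pin1 h Api).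
have chpj : forall c, A pj c = (c == lj) || (c == pi).
  move: Tpj => /andP[_ /eqP h]; exact: (pin2 h Apj Apjpi ljpi).
have [q [qpj Aqpi]] : exists q, q != pj /\ A q pi.
  move: Rpi => /andP[/eqP h _]; exact: (exD h Apjpi).
have parpi : forall p, A p pi = (p == pj) || (p == q).
  move: Rpi => /andP[/eqP h _]; apply: (pin2 h Apjpi Aqpi); by rewrite eq_sym.
have fli w : f li w = (li == w) by apply: fleaf.
have flj w : f lj w = (lj == w) by apply: fleaf.
have fpi w : f pi w = (pi == w) + f li w.
  by rewrite npaths_first // (big1p _ chpi).
have fpj w : f pj w = (pj == w) + (f lj w + f pi w).
  by rewrite npaths_first // (big2p _ ljpi chpj).
have lli u : f u li = (u == li) + f u pi.
  by rewrite npaths_last // (big1p _ parli).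
have llj u : f u lj = (u == lj) + f u pj.
  by rewrite npaths_last // (big1p _ parlj).
have lpi u : f u pi = (u == pi) + (f u pj + f u q).
  by rewrite npaths_last // (big2p _ _ parpi) // eq_sym.
have retsum u h : is_ret A h -> f u h <= mu u ord0.
  by move=> Rh; rewrite mu0 (bigD1 h) //= leq_addr.
have mui u : mu u i = f u li by apply: mu_at.
have muj u : mu u j = f u lj by apply: mu_at.
split.
  apply: (count_rep (u0 := pj)); first by rewrite Tpj orbT.
    apply/ffunP => k; rewrite delta_at; case: (posnP k) => k0.
      have -> : k = ord0 by apply: val_inj.
      rewrite mu0 /=.
      under eq_bigr => h _ do rewrite fpj flj fpi fli.
      rewrite !sum_split_ind sum_ind (tree_ret Tpj) (leaf_ret Llj) Rpi (leaf_ret Lli).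
      by [].
    rewrite muk //.
    under eq_bigr => h _ do rewrite fpj flj fpi fli.
    rewrite !sum_split_ind sum_ind (tree_leaf Tpj) (ret_leaf Rpi) Lli Llj labli lablj /=.
    rewrite !inE eqn0Ngt k0 /= ![_ == val k]eq_sym.
    case: (val k =P val i) => ki; case: (val k =P val j) => kj //.
    by move: ij; rewrite -val_eqE -ki -kj eqxx.
  move=> u Pu e.
  have m0 : mu u ord0 = 1 by rewrite e delta_at inE eqxx.
  have f1 : f u li = 1 by rewrite -mui e delta_at !inE eqxx orbT.
  have f2 : f u lj = 1 by rewrite -muj e delta_at !inE eqxx !orbT.
  have f0 : forall x, is_leaf A x -> x != li -> x != lj -> f u x = 0.
    move=> x Lx xli xlj.
    rewrite -(@mu_at _ _ _ _ labi u (Ordinal (ordlab Lx))) //; last by case/andP: (labr Lx).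
    rewrite e delta_at !inE /=.
    have := labr Lx; case/andP; rewrite lt0n => /negbTE -> _ /=.
    case: eqP => [ei|_]; first by move: xli; rewrite (labi Lx Lli) ?ei ?labli ?eqxx.
    case: eqP => [ej|_] //; by move: xlj; rewrite (labi Lx Llj) ?ej ?lablj ?eqxx.
  have Tu : is_tree A u.
    case/orP: Pu => // Lu; move: m0; rewrite mu0.
    under eq_bigr => h _ do rewrite (fleaf acyc _ Lu).
    by rewrite sum_ind (leaf_ret Lu).
  have ulj : (u == lj) = false by apply/negbTE/eqP => ul; move: Llj; rewrite -ul tree_leaf.
  have uli : (u == li) = false by apply/negbTE/eqP => ul; move: Lli; rewrite -ul tree_leaf.
  have upi : (u == pi) = false by apply/negbTE/eqP => ul; move: Rpi; rewrite -ul tree_ret.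
  have fpj1 : f u pj = 1 by move: f2; rewrite llj ulj.
  have fq0 : f u q = 0.
    have := retsum u _ Rpi; rewrite m0 lpi fpj1 upi /=; case: (f u q) => //= k.
  apply/eqP; apply/negP => /negP upj.
  have [c [Auc fc0]] : exists c, A u c /\ f c pj = 0.
    move: Tu => /andP[_ /eqP h]; have [c1 [c2 [c12 A1 A2]]] := ex2 h.
    move: fpj1; rewrite npaths_first // (big2p _ c12 (pin2 h A1 A2 c12)) (negbTE upj) /=.
    case E1: (f c1 pj) => [|k]; first by exists c1.
    case E2: (f c2 pj) => [|k2]; first by exists c2.
    by rewrite add0n addSn addnS.
  have [x [Lx cx]] := reach_leaf acyc cls c.
  have fcx := fconn acyc cx.
  have fux : 0 < f u x := leq_trans fcx (fchild acyc x Auc).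
  case: (x =P lj) => [exj|/eqP xlj].
    move: fcx; rewrite exj llj fc0 addn0 lt0b => /eqP ecl.
    by move: Auc; rewrite ecl parlj (negbTE upj).
  case: (x =P li) => [exi|/eqP xli]; last by move: fux; rewrite f0.
  move: fcx; rewrite exi lli lpi fc0 /=.
  have fcq : f c q = 0 by apply/eqP; rewrite -leqn0 -fq0; exact: fchild.
  rewrite fcq addn0.
  case: (c =P li) => [ecli|_].
    by move: Auc; rewrite ecli parli upi.
  case: (c =P pi) => [ecpi|_] //.
  move: (parpi u); rewrite -ecpi Auc (negbTE upj) /= => /esym/eqP euq.
  by move: fq0; rewrite -euq => e0; have := fself acyc u; rewrite e0.
move=> m; rewrite mem_rep => /existsP[u /andP[Pu /eqP ->]] ni nj.
have uli : u != li by apply/eqP => e; move: ni; rewrite e mu_leaf // labli eqxx.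
have ulj : u != lj by apply/eqP => e; move: nj; rewrite e mu_leaf // lablj eqxx.
rewrite mui muj lli llj (negbTE uli) (negbTE ulj) /=.
apply/andP; split; first exact: retsum.
by rewrite lpi (leq_trans (leq_addr (f u q) _) (leq_addl _ _)).
Qed.

Definition R w := \sum_(h | is_ret A h) f w h.

Lemma chainG p w l : A p w -> is_leaf A l -> (forall x, is_leaf A x -> f w x = (x == l)) ->
  w != l -> is_ret A w.
Proof.
move=> Apw Ll prop wl.
have := cls w; rewrite (haspar_notroot Apw) /=.
case Lw: (is_leaf A w).
  by have := fself acyc w; rewrite prop // (negbTE wl).
case Tw: (is_tree A w) => //= _.
move: Tw => /andP[_ /eqP h]; have [c1 [c2 [c12 A1 A2]]] := ex2 h.
have [x1 [L1 cx1]] := reach_leaf acyc cls c1.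
have [x2 [L2 cx2]] := reach_leaf acyc cls c2.
have f1 := fconn acyc cx1; have f2 := fconn acyc cx2.
have e1 : x1 = l.
  by apply/eqP; have := leq_trans f1 (fchild acyc x1 A1); rewrite prop //; case: (x1 == l).
have e2 : x2 = l.
  by apply/eqP; have := leq_trans f2 (fchild acyc x2 A2); rewrite prop //; case: (x2 == l).
have := prop l Ll; rewrite eqxx npaths_first // (big2p _ c12 (pin2 h A1 A2 c12)) (negbTE wl).
rewrite e1 in f1; rewrite e2 in f2.
by rewrite add0n; case: (f c1 l) f1 => // k _; case: (f c2 l) f2 => // k2 _; rewrite addSn addnS.
Qed.

Lemma chainH0 p w l : A p w -> is_leaf A l -> (forall x, is_leaf A x -> f w x = (x == l)) ->
  R w = 0 -> w = l.
Proof.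
move=> Apw Ll prop R0; apply/eqP/negP => /negP wl.
have Rw := chainG Apw Ll prop wl.
by move: R0; rewrite /R (bigD1 w) //=; have := fself acyc w; case: (f w w).
Qed.

Lemma chainH1 p w l : A p w -> is_leaf A l -> (forall x, is_leaf A x -> f w x = (x == l)) ->
  R w = 1 -> is_ret A w /\ A w l.
Proof.
move=> Apw Ll prop R1.
have wl : w != l.
  apply/eqP => e; move: R1; rewrite /R e.
  under eq_bigr => h _ do rewrite (fleaf acyc _ Ll).
  by rewrite sum_ind (leaf_ret Ll).
have Rw := chainG Apw Ll prop wl.
move: (Rw) => /andP[_ /eqP h]; have [d Awd] := ex1 h.
have chw := pin1 h Awd.
have fw y : f w y = (w == y) + f d y by rewrite npaths_first // (big1p _ chw).
have Rd : R d = 0.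
  move: R1; rewrite /R.
  under eq_bigr => y _ do rewrite fw.
  by rewrite sum_split_ind Rw add1n => -[].
have propd : forall x, is_leaf A x -> f d x = (x == l).
  move=> x Lx; rewrite -prop // fw; case: (w =P x) => [e|_] //.
  by move: Rw; rewrite e leaf_ret.
have := chainH0 Awd Ll propd Rd => e; split => //; by rewrite -e.
Qed.


Lemma caseA (i j : 'I_n.+1) li lj u r : 0 < i -> 0 < j ->
  is_leaf A li -> lab li = i -> is_leaf A lj -> lab lj = j ->
  is_tree A u -> A u li -> A u r -> is_ret A r -> A r lj ->
  (forall m, m \in mu_rep A n lab -> m != delta n [:: val i] -> m != delta n [:: val j] ->
    (m i <= m ord0) && (m j <= m i)) -> False.
Proof.
move=> i0 j0 Lli labli Llj lablj Tu Auli Aur Rr Arlj cond.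
have parli : forall p, A p li = (p == u).
  move: Lli => /andP[/eqP h _]; exact: (pin1 h Auli).
have parlj : forall p, A p lj = (p == r).
  move: Llj => /andP[/eqP h _]; exact: (pin1 h Arlj).
have [q [qu Aqr]] : exists q, q != u /\ A q r.
  move: Rr => /andP[/eqP h _]; exact: (exD h Aur).
have parr : forall p, A p r = (p == u) || (p == q).
  move: Rr => /andP[/eqP h _]; apply: (pin2 h Aur Aqr); by rewrite eq_sym.
have lli v : f v li = (v == li) + f v u by rewrite npaths_last // (big1p _ parli).
have llj v : f v lj = (v == lj) + f v r by rewrite npaths_last // (big1p _ parlj).
have lr v : f v r = (v == r) + (f v u + f v q).
  by rewrite npaths_last // (big2p _ _ parr) // eq_sym.
have [r0 Rr0] := ex1 root1.
have cq := root_reach acyc cls root1 q Rr0.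
have [x [Tx cxq]] : exists x, is_tree A x /\ connect A x q.
  case: (r0 =P q) => [e|/eqP ne].
    by move: Rr; rewrite (root_child acyc cls root1 Rr0 (_ : A r0 r)) // e.
  have [x [Ar0x cx]] := connect_step cq ne.
  exists x; split => //.
  have := cls x; rewrite (haspar_notroot Ar0x) (root_child acyc cls root1 Rr0 Ar0x) orbF /=.
  case Lx: (is_leaf A x) => //= _.
  case: (x =P q) => [exq|/eqP nxq].
    by move: Aqr; rewrite -exq leaf_noch.
  have [y [Axy _]] := connect_step cx nxq.
  by move: Axy; rewrite leaf_noch.
have fxq := fconn acyc cxq.
have xr0 : 0 < mu x ord0.
  rewrite mu0 (bigD1 r) //= lr.
  apply: leq_trans fxq _; rewrite addnA -addnA; apply: leq_trans (leq_addr _ _) (leq_addl _ _).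
have xnd k : 0 < k -> mu x != delta n [:: k].
  move=> k0; apply/eqP => e; move: xr0; rewrite e delta_at inE.
  by rewrite eq_sym eqn0Ngt k0.
have := cond (mu x); rewrite mem_rep; case/(_ _ _ _)/andP.
- by apply/existsP; exists x; rewrite Tx orbT eqxx.
- exact: xnd.
- exact: xnd.
move=> _.
rewrite (mu_at labi _ Llj lablj) // (mu_at labi _ Lli labli) // llj lli lr.
have -> : (x == lj) = false by apply/negbTE/eqP => e; move: Llj; rewrite -e tree_leaf.
have -> : (x == li) = false by apply/negbTE/eqP => e; move: Lli; rewrite -e tree_leaf.
rewrite /= !add0n addnA; case: (x == r) => /=; rewrite ?add1n.
- by move=> h; have := leq_trans (leq_addr _ _) h; rewrite ltnn.
- by rewrite -{2}(addn0 (f x u)) leq_add2l leqn0 => /eqP e; move: fxq; rewrite e.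
Qed.


Lemma bwd (i j : 'I_n.+1) : 0 < i -> 0 < j -> i != j ->
  ret_cherry_ms (mu_rep A n lab) i j -> ret_cherry_net A lab i j.
Proof.
move=> i0 j0 ij [cnt1 cond].
have [u [Pu e]] : exists u, (is_leaf A u || is_tree A u) /\ mu u = delta n [:: 0; val i; val j].
  by apply: count_ex; rewrite cnt1.
have m0 : mu u ord0 = 1 by rewrite e delta_at inE eqxx.
have Tu : is_tree A u.
  case/orP: Pu => // Lu; move: m0; rewrite mu0.
  under eq_bigr => h _ do rewrite (fleaf acyc _ Lu).
  by rewrite sum_ind (leaf_ret Lu).
have exl (k : 'I_n.+1) : 0 < k -> mu u k = 1 -> exists l, [/\ is_leaf A l, lab l = k & f u l = 1].
  move=> k0; case: (pickP (fun x => is_leaf A x && (lab x == k))) => [l /andP[Ll /eqP ll]|none].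
    by rewrite (mu_at labi _ Ll ll) // => h; exists l.
  by rewrite muk // big_pred0.
have mi : mu u i = 1 by rewrite e delta_at !inE eqxx orbT.
have mj : mu u j = 1 by rewrite e delta_at !inE eqxx !orbT.
have [li [Lli labli fli]] := exl i i0 mi.
have [lj [Llj lablj flj]] := exl j j0 mj.
have lilj : li != lj.
  by move: ij; apply: contraNneq => e'; rewrite -val_eqE /= -labli -lablj e'.
have f0 : forall x, is_leaf A x -> x != li -> x != lj -> f u x = 0.
  move=> x Lx xli xlj.
  rewrite -(@mu_at _ _ _ _ labi u (Ordinal (ordlab Lx))) //; last by case/andP: (labr Lx).
  rewrite e delta_at !inE /=.
  have := labr Lx; case/andP; rewrite lt0n => /negbTE -> _ /=.
  case: eqP => [ei|_]; first by move: xli; rewrite (labi Lx Lli) ?ei ?labli ?eqxx.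
  case: eqP => [ej|_] //; by move: xlj; rewrite (labi Lx Llj) ?ej ?lablj ?eqxx.
move: (Tu) => /andP[_ /eqP hu]; have [c1 [c2 [c12 A1 A2]]] := ex2 hu.
have core : forall a b, a != b -> (forall c, A u c = (c == a) || (c == b)) ->
    0 < f a li -> 0 < f b lj -> ret_cherry_net A lab i j.
  move=> a b ab chu fa fb.
  have Aua : A u a by rewrite chu eqxx.
  have Aub : A u b by rewrite chu eqxx orbT.
  have fu w : u != w -> f u w = f a w + f b w.
    by move=> uw; rewrite npaths_first // (big2p _ ab chu) (negbTE uw).
  have uleaf x : is_leaf A x -> u != x.
    by move=> Lx; apply/eqP => ex; move: Tu; rewrite ex leaf_tree.
  have propa : forall x, is_leaf A x -> f a x = (x == li).
    move=> x Lx; case: (x =P li) => [->|/eqP xli].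
      by move: fli; rewrite fu ?uleaf //; case: (f a li) fa => // [[|k]] _ //=; rewrite addSn.
    case: (x =P lj) => [->|/eqP xlj].
      move: flj; rewrite fu ?uleaf //; case: (f b lj) fb => // k _.
      by rewrite addnS => -[]; case: (f a lj).
    by move: (f0 x Lx xli xlj); rewrite fu ?uleaf //; case: (f a x).
  have propb : forall x, is_leaf A x -> f b x = (x == lj).
    move=> x Lx; case: (x =P lj) => [->|/eqP xlj].
      by move: flj; rewrite fu ?uleaf //; case: (f b lj) fb => // [[|k]] _ //=; rewrite !addnS.
    case: (x =P li) => [->|/eqP xli].
      move: fli; rewrite fu ?uleaf //; case: (f a li) fa => // k _.
      by rewrite addSn => -[]; move/eqP; rewrite addn_eq0 => /andP[_ /eqP ->].
    by move: (f0 x Lx xli xlj); rewrite fu ?uleaf //; move/eqP; rewrite addn_eq0 => /andP[_ /eqP ->].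
  have Rab : R a + R b = 1.
    move: m0; rewrite mu0.
    rewrite (eq_bigr (fun h => f a h + f b h)); first by rewrite big_split.
    by move=> h Rh; apply: fu; apply/eqP => eh; move: Rh; rewrite -eh tree_ret.
  case Ea: (R a) Rab => [|[|k]] Rab.
  - have ea := chainH0 Aua Lli propa Ea.
    have [Rb Ablj] := chainH1 Aub Llj propb Rab.
    exfalso; apply: (caseA i0 j0 Lli labli Llj lablj Tu _ Aub Rb Ablj cond).
    by rewrite -ea.
  - have [Ra Aali] := chainH1 Aua Lli propa Ea.
    have eb : b = lj by apply: (chainH0 Aub Llj propb); move: Rab; case: (R b).
    exists li, lj, a, u; split => //; by rewrite -eb.
  - by move: Rab; rewrite addSn addSn.
have chu : forall c, A u c = (c == c1) || (c == c2) := pin2 hu A1 A2 c12.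
have fu w : u != w -> f u w = f c1 w + f c2 w.
  by move=> uw; rewrite npaths_first // (big2p _ c12 chu) (negbTE uw).
have uleaf x : is_leaf A x -> u != x.
  by move=> Lx; apply/eqP => ex; move: Tu; rewrite ex leaf_tree.
have [x1 [L1 cx1]] := reach_leaf acyc cls c1.
have [x2 [L2 cx2]] := reach_leaf acyc cls c2.
have g1 := fconn acyc cx1; have g2 := fconn acyc cx2.
have inl x : is_leaf A x -> 0 < f u x -> (x == li) || (x == lj).
  move=> Lx; case: (x =P li) => // /eqP xli; case: (x =P lj) => // /eqP xlj.
  by rewrite f0.
have two l : is_leaf A l -> f u l = 1 -> 0 < f c1 l -> 0 < f c2 l -> False.
  move=> Ll; rewrite fu ?uleaf //; case: (f c1 l) => // k; case: (f c2 l) => // k2.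
  by rewrite addSn addnS.
have h1 := inl x1 L1 (leq_trans g1 (fchild acyc x1 A1)).
have h2 := inl x2 L2 (leq_trans g2 (fchild acyc x2 A2)).
case/orP: h1 => /eqP e1; case/orP: h2 => /eqP e2; subst x1 x2.
- by case: (two li Lli fli g1 g2).
- exact: (core c1 c2 c12 chu g1 g2).
- apply: (core c2 c1 _ _ g2 g1); first by rewrite eq_sym.
  by move=> c; rewrite chu orbC.
- by case: (two lj Llj flj g1 g2).
Qed.

End Main.

Theorem mainTheorem4 (n : nat) (V : finType) (A : rel V) (lab : V -> nat) :
  phylo_network A n lab ->
  forall i j : 'I_n.+1, 0 < val i -> 0 < val j -> i != j ->
  ret_cherry_net A lab (val i) (val j) <-> ret_cherry_ms (mu_rep A n lab) i j.
Proof.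
case=> acyc cls root1 labr labi i j i0 j0 ij; split.
  case=> li [lj [pi [pj [[Lli labli] [Llj lablj] [Api Rpi] [Apj Tpj] Apjpi]]]].
  exact: (fwd acyc cls labr labi i0 j0 ij Lli labli Llj lablj Api Rpi Apj Tpj Apjpi).
exact: (bwd acyc cls root1 labr labi i0 j0 ij).
Qed.
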